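(* Let $\mathcal{A}$ be the adjacency matrix of a graph on $N$ nodes with $\mathcal{A}_{ii}=1$ for all $i$. Consider any plant with state-space dynamics $\dot x=Ax+B_1w+B_2u$, $z=C_1x+D_{12}u$, $y=C_2x+D_{21}w$, where $x,u,y$ are partitioned into $N$ site sub-signals. If a proper rational transfer matrix $K$ (controller $u=Ky$) is closed-loop TF-structured with respect to $\mathcal{A}$ for this plant, then $K$ is $\mathcal{A}$-structured-realizable.
   Context: Closed-loop TF-structure: consider the auxiliary system $\dot x=Ax+B_2u+\delta_x$, $y=C_2x+\delta_y$ in feedback with $u=Ky$ (assumed well-posed), and let $\Phi=\begin{bmatrix}\Phi_{xx}&\Phi_{xy}\\ \Phi_{ux}&\Phi_{uy}\end{bmatrix}$ be the resulting closed-loop transfer matrix from $(\delta_x,\delta_y)$ to $(x,u)$. $K$ is closed-loop TF-structured with respect to $\mathcal{A}$ if each of $\Phi_{xx},\Phi_{xy},\Phi_{ux},\Phi_{uy}$ (with inputs and outputs partitioned by site) is TF-structured with respect to $\mathcal{A}$, meaning its $(i,j)$ block is identically zero whenever $\mathcal{A}_{ij}=0$. A matrix $M$ partitioned into $N\times N$ blocks is in $\mathcal{S}(\mathcal{A})$ if its $(i,j)$ block is zero whenever $\mathcal{A}_{ij}=0$. An LTI system is $\mathcal{A}$-structured-realizable if it has a state-space realization $(A_K,B_K,C_K,D_K)$, with state partitioned into $N$ (possibly empty) sub-states, such that $A_K,B_K,C_K,D_K\in\mathcal{S}(\mathcal{A})$. *)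

(* Defs.v *)
From HB Require Import structures.
From mathcomp Require Import all_boot all_order all_algebra.
From mathcomp Require Import reals.
Set Implicit Arguments. Unset Strict Implicit. Unset Printing Implicit Defensive.
Import GRing.Theory.
Local Open Scope ring_scope.

Section Defs.
Variable R : realType.

(* the field of real rational functions in the Laplace variable s *)
Definition ratf := {fraction {poly R}}.

Definition cst (a : R) : ratf := FracField.tofrac (a%:P).
Definition svar : ratf := FracField.tofrac ('X : {poly R}).

Definition tfm m n (M : 'M[R]_(m, n)) : 'M[ratf]_(m, n) := map_mx cst M.

Definition proper_ratf (f : ratf) : Prop :=
  exists (p q : {poly R}), q != 0 /\ (size p <= size q)%N /\ f = FracField.tofrac p / FracField.tofrac q.

Definition proper_tf m n (K : 'M[ratf]_(m, n)) : Prop :=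
  forall i j, proper_ratf (K i j).

Definition ss_tf k m n (AK : 'M[R]_k) (BK : 'M[R]_(k, n)) (CK : 'M[R]_(m, k))
  (DK : 'M[R]_(m, n)) : 'M[ratf]_(m, n) :=
  tfm CK *m invmx (svar%:M - tfm AK) *m tfm BK + tfm DK.

(* Sparsity pattern: coordinates of signals are assigned to sites by maps
   rs (rows) and cs (columns); block (i,j) is the set of entries (p,q) with
   rs p = i, cs q = j. *)
Definition in_S T (zero : T) N (Adj : 'M[bool]_N) m n
  (rs : 'I_m -> 'I_N) (cs : 'I_n -> 'I_N) (M : 'M[T]_(m, n)) : Prop :=
  forall p q, ~~ Adj (rs p) (cs q) -> M p q = zero.

Definition real_in_S N Adj m n rs cs (M : 'M[R]_(m, n)) :=
  @in_S R 0 N Adj m n rs cs M.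
Definition tf_structured N Adj m n rs cs (M : 'M[ratf]_(m, n)) :=
  @in_S ratf 0 N Adj m n rs cs M.

(* Closed loop of  x' = A x + B2 u + dx,  y = C2 x + dy,  u = K y.
   Resolvent Gx = (sI - A)^{-1}. *)
Definition resolvent n (A : 'M[R]_n) : 'M[ratf]_n := invmx (svar%:M - tfm A).

Definition loop_mx n nu ny (A : 'M[R]_n) (B2 : 'M[R]_(n, nu)) (C2 : 'M[R]_(ny, n))
  (K : 'M[ratf]_(nu, ny)) : 'M[ratf]_nu :=
  1%:M - K *m tfm C2 *m resolvent A *m tfm B2.

Definition well_posed n nu ny A B2 C2 K := @loop_mx n nu ny A B2 C2 K \in unitmx.

Definition Phi_uy n nu ny A B2 C2 (K : 'M[ratf]_(nu, ny)) : 'M[ratf]_(nu, ny) :=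
  invmx (@loop_mx n nu ny A B2 C2 K) *m K.
Definition Phi_ux n nu ny A B2 C2 (K : 'M[ratf]_(nu, ny)) : 'M[ratf]_(nu, n) :=
  @Phi_uy n nu ny A B2 C2 K *m tfm C2 *m resolvent A.
Definition Phi_xy n nu ny A B2 C2 (K : 'M[ratf]_(nu, ny)) : 'M[ratf]_(n, ny) :=
  resolvent A *m tfm B2 *m @Phi_uy n nu ny A B2 C2 K.
Definition Phi_xx n nu ny A B2 C2 (K : 'M[ratf]_(nu, ny)) : 'M[ratf]_n :=
  resolvent A + resolvent A *m tfm B2 *m @Phi_ux n nu ny A B2 C2 K.

Definition closed_loop_TF_structured N (Adj : 'M[bool]_N) n nu ny
  (sx : 'I_n -> 'I_N) (su : 'I_nu -> 'I_N) (sy : 'I_ny -> 'I_N)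
  A B2 C2 (K : 'M[ratf]_(nu, ny)) : Prop :=
  [/\ tf_structured Adj sx sx (@Phi_xx n nu ny A B2 C2 K),
      tf_structured Adj sx sy (@Phi_xy n nu ny A B2 C2 K),
      tf_structured Adj su sx (@Phi_ux n nu ny A B2 C2 K) &
      tf_structured Adj su sy (@Phi_uy n nu ny A B2 C2 K)].

(* A-structured realizability: a realization whose state is split into N
   (possibly empty) sub-states via sk, with all four matrices in S(Adj). *)
Definition structured_realizable N (Adj : 'M[bool]_N) nu ny
  (su : 'I_nu -> 'I_N) (sy : 'I_ny -> 'I_N) (K : 'M[ratf]_(nu, ny)) : Prop :=
  exists (k : nat) (sk : 'I_k -> 'I_N) (AK : 'M[R]_k) (BK : 'M[R]_(k, ny))
         (CK : 'M[R]_(nu, k)) (DK : 'M[R]_(nu, ny)),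
    [/\ real_in_S Adj sk sk AK, real_in_S Adj sk sy BK,
        real_in_S Adj su sk CK, real_in_S Adj su sy DK &
        K = ss_tf AK BK CK DK].

End Defs.

(* Main.v *)
Require Import Defs.
From mathcomp Require Import all_boot all_order all_algebra.
From mathcomp Require Import reals ring.
Set Implicit Arguments. Unset Strict Implicit. Unset Printing Implicit Defensive.
Import GRing.Theory.
Local Open Scope ring_scope.
Section S.
Variable R : realType.
Local Notation F := (ratf R).
Lemma tfmE m n (M : 'M[R]_(m,n)) : tfm M = map_mx ((@FracField.tofrac _) \o polyC) M.
Proof. by apply/matrixP=> i j; rewrite !mxE. Qed.
Lemma tfmM m n p (M : 'M[R]_(m,n)) (N : 'M[R]_(n,p)) : tfm (M *m N) = tfm M *m tfm N.
Proof. by rewrite !tfmE map_mxM. Qed.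
Lemma tfmD m n (M N : 'M[R]_(m,n)) : tfm (M + N) = tfm M + tfm N.
Proof. by rewrite !tfmE map_mxD. Qed.
Lemma tfmN m n (M : 'M[R]_(m,n)) : tfm (- M) = - tfm M.
Proof. by rewrite !tfmE map_mxN. Qed.
Lemma tfm1 m : tfm (1%:M : 'M[R]_m) = 1%:M.
Proof. by rewrite !tfmE map_mx1. Qed.
Lemma tfm0 m n : tfm (0 : 'M[R]_(m,n)) = 0.
Proof. by rewrite !tfmE map_mx0. Qed.

Lemma inv_eq k (A B : 'M[F]_k) : A *m B = 1%:M -> invmx A = B.
Proof.
move=> H; have [uA _] := mulmx1_unit H.
by rewrite -[invmx A]mulmx1 -H mulmxA mulVmx // mul1mx.
Qed.

Local Notation Rs A := (invmx ((svar R)%:M - tfm A)).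

Lemma sIA_unit k (A : 'M[R]_k) : (svar R)%:M - tfm A \in unitmx.
Proof.
have -> : (svar R)%:M - tfm A = map_mx (@FracField.tofrac _) (char_poly_mx A).
  apply/matrixP=> i j; rewrite /char_poly_mx !mxE /svar /cst. by rewrite rmorphB rmorphMn.
rewrite unitmxE det_map_mx unitfE tofrac_eq0.
exact: monic_neq0 (char_poly_monic A).
Qed.
Lemma RsK k (A : 'M[R]_k) : ((svar R)%:M - tfm A) *m Rs A = 1%:M.
Proof. by rewrite mulmxV // sIA_unit. Qed.
Lemma RsKV k (A : 'M[R]_k) : Rs A *m ((svar R)%:M - tfm A) = 1%:M.
Proof. by rewrite mulVmx // sIA_unit. Qed.

Definition real_ss m n (M : 'M[F]_(m,n)) (D : 'M[R]_(m,n)) :=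
  exists k (A : 'M[R]_k) B C, M = ss_tf A B C D.

Lemma tfm_block m1 m2 n1 n2 (A : 'M[R]_(m1,n1)) (B : 'M[R]_(m1,n2)) (C : 'M[R]_(m2,n1)) (D : 'M[R]_(m2,n2)) :
  tfm (block_mx A B C D) = block_mx (tfm A) (tfm B) (tfm C) (tfm D).
Proof. by rewrite !tfmE map_block_mx. Qed.
Lemma tfm_row m n1 n2 (A : 'M[R]_(m,n1)) (B : 'M[R]_(m,n2)) :
  tfm (row_mx A B) = row_mx (tfm A) (tfm B).
Proof. by rewrite !tfmE map_row_mx. Qed.
Lemma tfm_col m1 m2 n (A : 'M[R]_(m1,n)) (B : 'M[R]_(m2,n)) :
  tfm (col_mx A B) = col_mx (tfm A) (tfm B).
Proof. by rewrite !tfmE map_col_mx. Qed.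

Lemma sI_block k1 k2 (A1 : 'M[R]_k1) A12 A21 (A2 : 'M[R]_k2) :
  (svar R)%:M - tfm (block_mx A1 A12 A21 A2) =
  block_mx ((svar R)%:M - tfm A1) (- tfm A12) (- tfm A21) ((svar R)%:M - tfm A2).
Proof.
by rewrite tfm_block (scalar_mx_block k1 k2) opp_block_mx add_block_mx !add0r.
Qed.

Lemma Rs_diag k1 k2 (A1 : 'M[R]_k1) (A2 : 'M[R]_k2) :
  Rs (block_mx A1 0 0 A2) = block_mx (Rs A1) 0 0 (Rs A2).
Proof.
apply: inv_eq; rewrite sI_block !tfm0 !oppr0 mulmx_block.
  by rewrite !mulmx0 !mul0mx !addr0 !add0r !RsK -scalar_mx_block.
Qed.

Lemma real_add m n (M1 M2 : 'M[F]_(m,n)) D1 D2 :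
  real_ss M1 D1 -> real_ss M2 D2 -> real_ss (M1 + M2) (D1 + D2).
Proof.
move=> [k1 [A1 [B1 [C1 ->]]]] [k2 [A2 [B2 [C2 ->]]]].
exists (k1 + k2)%N, (block_mx A1 0 0 A2), (col_mx B1 B2), (row_mx C1 C2).
rewrite /ss_tf Rs_diag tfm_row tfm_col tfmD mul_row_block !mulmx0 ?mul0mx.
by rewrite addr0 add0r mul_row_col addrACA.
Qed.

Lemma Rs_utri k1 k2 (A1 : 'M[R]_k1) A12 (A2 : 'M[R]_k2) :
  Rs (block_mx A1 A12 0 A2) = block_mx (Rs A1) (Rs A1 *m tfm A12 *m Rs A2) 0 (Rs A2).
Proof.
apply: inv_eq; rewrite sI_block !tfm0 !oppr0 mulmx_block.
rewrite !mulmx0 ?mul0mx ?addr0 ?add0r !RsK.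
by rewrite !mulmxA RsK mul1mx mulNmx addrN -scalar_mx_block.
Qed.

Lemma real_mul m p n (M1 : 'M[F]_(m,p)) (M2 : 'M[F]_(p,n)) D1 D2 :
  real_ss M1 D1 -> real_ss M2 D2 -> real_ss (M1 *m M2) (D1 *m D2).
Proof.
move=> [k1 [A1 [B1 [C1 ->]]]] [k2 [A2 [B2 [C2 ->]]]].
exists (k1 + k2)%N, (block_mx A1 (B1 *m C2) 0 A2), (col_mx (B1 *m D2) B2), (row_mx C1 (D1 *m C2)).
rewrite /ss_tf Rs_utri tfm_row tfm_col !tfmM mul_row_block !mulmx0 ?mul0mx.
rewrite addr0 mul_row_col mulmxDl !mulmxDr !mulmxA mulmxDl !addrA.
by rewrite (addrC (tfm C1 *m Rs A1 *m tfm B1 *m tfm D2)).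
Qed.

Lemma real_const m n (D : 'M[R]_(m,n)) : real_ss (tfm D) D.
Proof.
exists 0%N, 0, 0, 0; by rewrite /ss_tf !tfm0 !mul0mx add0r.
Qed.

Lemma real_eqD m n (M : 'M[F]_(m,n)) D D' : real_ss M D -> D = D' -> real_ss M D'.
Proof. by move=> ? <-. Qed.
Lemma real_eqM m n (M M' : 'M[F]_(m,n)) D : real_ss M D -> M = M' -> real_ss M' D.
Proof. by move=> ? <-. Qed.

Opaque invmx.
Lemma zmod_aux (V : zmodType) (x a b : V) : x - a + (b - (b - a)) = x.
Proof. by rewrite opprB (addrC b) subrK subrK. Qed.

Section FB.
Variables (k m : nat) (A : 'M[R]_k) (B : 'M[R]_(k,m)) (C : 'M[R]_(m,k)).

Lemma BC_eq : tfm B *m tfm C =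
  ((svar R)%:M - tfm A) - ((svar R)%:M - tfm (A + B *m C)).
Proof. by rewrite tfmD tfmM opprB addrC addrA addrNK addrC addKr. Qed.

Lemma Rs_res1 : Rs A *m tfm B *m tfm C *m Rs (A + B *m C) = Rs (A + B *m C) - Rs A.
Proof.
by rewrite -(mulmxA (Rs A)) BC_eq mulmxBr mulmxBl RsKV mul1mx -mulmxA RsK mulmx1.
Qed.
Lemma Rs_res2 : Rs (A + B *m C) *m tfm B *m tfm C *m Rs A = Rs (A + B *m C) - Rs A.
Proof.
by rewrite -(mulmxA (Rs _)) BC_eq mulmxBr mulmxBl RsKV mul1mx -mulmxA RsK mulmx1.
Qed.

Lemma fb_prod : (1%:M - tfm C *m Rs A *m tfm B) *m (1%:M + tfm C *m Rs (A + B *m C) *m tfm B) = 1%:M.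
Proof.
rewrite mulmxDr mulmx1 mulmxBl mul1mx.
have -> : tfm C *m Rs A *m tfm B *m (tfm C *m Rs (A + B *m C) *m tfm B) =
   tfm C *m (Rs A *m tfm B *m tfm C *m Rs (A + B *m C)) *m tfm B by rewrite !mulmxA.
rewrite Rs_res1 mulmxBr mulmxBl.
exact: (@zmod_aux _ 1%:M (tfm C *m Rs A *m tfm B) (tfm C *m Rs (A + B *m C) *m tfm B)).
Qed.

Lemma fb_unit : (1%:M - tfm C *m Rs A *m tfm B) \in unitmx.
Proof. exact: (proj1 (mulmx1_unit fb_prod)). Qed.

Lemma fb_inv : invmx (1%:M - tfm C *m Rs A *m tfm B) = 1%:M + tfm C *m Rs (A + B *m C) *m tfm B.
Proof. exact: (inv_eq fb_prod). Qed.
End FB.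

Lemma real_fb m (L : 'M[F]_m) : real_ss L 0 ->
  (1%:M - L) \in unitmx /\ real_ss (invmx (1%:M - L)) 1%:M.
Proof.
move=> [k [A [B [C ->]]]]; rewrite /ss_tf tfm0 addr0; split; first exact: (fb_unit A B C).
rewrite (fb_inv A B C); exists k, (A + B *m C), B, C; by rewrite /ss_tf tfm1 addrC.
Qed.

Lemma zmod_aux2 (V : zmodType) (a b : V) : a + (b - a) = b.
Proof. by rewrite addrC subrK. Qed.

Lemma zmod_aux3 (V : zmodType) (x w y z : V) : x + w + ((y - x) + z) = y + z + w.
Proof. by rewrite [y - x + z]addrAC addrA addrAC (addrAC x) subrr add0r addrC. Qed.

Lemma lft_tf k n1 n2 m2 (A : 'M[R]_k) (B1 : 'M[R]_(k, n1)) (B2 : 'M[R]_(k, n2))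
  (C1 : 'M[R]_(n1, k)) (C2 : 'M[R]_(m2, k)) (D12 : 'M[R]_(n1, n2)) (D22 : 'M[R]_(m2, n2)) :
  ss_tf A (row_mx B1 B2) (col_mx C1 C2) (block_mx 0 D12 0 D22) =
  block_mx (tfm C1 *m Rs A *m tfm B1) (tfm C1 *m Rs A *m tfm B2 + tfm D12)
           (tfm C2 *m Rs A *m tfm B1) (tfm C2 *m Rs A *m tfm B2 + tfm D22).
Proof.
rewrite /ss_tf tfm_col tfm_row tfm_block mul_col_mx mul_col_row !tfm0.
by rewrite add_block_mx !addr0.
Qed.

Lemma lft k n1 n2 m2 (A : 'M[R]_k) (B1 : 'M[R]_(k, n1)) (B2 : 'M[R]_(k, n2))
  (C1 : 'M[R]_(n1, k)) (C2 : 'M[R]_(m2, k)) (D12 : 'M[R]_(n1, n2)) (D22 : 'M[R]_(m2, n2)) 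
  (M : 'M[F]_(n1 + m2, n1 + n2)) :
  M = ss_tf A (row_mx B1 B2) (col_mx C1 C2) (block_mx 0 D12 0 D22) ->
  (1%:M - ulsubmx M) \in unitmx /\
  drsubmx M + dlsubmx M *m invmx (1%:M - ulsubmx M) *m ursubmx M =
  ss_tf (A + B1 *m C1) (B2 + B1 *m D12) C2 D22.
Proof.
move=> ->; rewrite lft_tf block_mxKul block_mxKdr block_mxKdl block_mxKur.
split; first exact: (fb_unit A B1 C1).
rewrite (fb_inv A B1 C1) /ss_tf (tfmD B2) (tfmM B1 D12).
have e1 := Rs_res1 A B1 C1; have e2 := Rs_res2 A B1 C1; move: e1 e2.
move: (Rs A) (Rs (A + B1 *m C1)) (tfm C2) (tfm B1) (tfm C1) (tfm B2) (tfm D12) (tfm D22).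
move=> R1 R2 c2 b1 c1 b2 d12 d22 e1 e2.
have h1 : c2 *m R1 *m b1 *m (1%:M + c1 *m R2 *m b1) = c2 *m R2 *m b1.
  rewrite mulmxDr mulmx1.
  have -> : c2 *m R1 *m b1 *m (c1 *m R2 *m b1) = c2 *m (R1 *m b1 *m c1 *m R2) *m b1 by rewrite !mulmxA.
  by rewrite e1 mulmxBr mulmxBl zmod_aux2.
rewrite h1 mulmxDr.
have -> : c2 *m R2 *m b1 *m (c1 *m R1 *m b2) = c2 *m (R2 *m b1 *m c1 *m R1) *m b2 by rewrite !mulmxA.
by rewrite e2 mulmxBr mulmxBl mulmxDr !mulmxA zmod_aux3.
Qed.

Lemma scalar_mxD' n (a b : F) : (a + b)%:M = a%:M + b%:M :> 'M_n.
Proof. exact: raddfD. Qed.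
Lemma scalar_mxDR n (a b : R) : (a + b)%:M = a%:M + b%:M :> 'M_n.
Proof. exact: raddfD. Qed.

Lemma svar_neq0 : svar R != 0.
Proof. by rewrite /svar tofrac_eq0 polyX_eq0. Qed.

Lemma tfm_scalar n (c : R) : tfm (c%:M : 'M_n) = (cst c)%:M.
Proof. by rewrite tfmE map_scalar_mx. Qed.

Lemma real_opp m n (M : 'M[F]_(m,n)) D : real_ss M D -> real_ss (- M) (- D).
Proof.
move=> h; have := real_mul (real_const (- 1%:M)) h.
by rewrite tfmN tfm1 !mulNmx !mul1mx.
Qed.

Lemma real_Rs k (A : 'M[R]_k) : real_ss (Rs A) 0.
Proof. by exists k, A, 1%:M, 1%:M; rewrite /ss_tf tfm1 tfm0 mul1mx mulmx1 addr0. Qed.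

Local Notation h := ((svar R)^-1).

Lemma real_h : real_ss ((h)%:M : 'M[F]_1) 0.
Proof.
exists 1%N, 0, 1%:M, 1%:M; rewrite /ss_tf tfm1 tfm0 mul1mx mulmx1 addr0 subr0.
symmetry; apply: inv_eq; by rewrite -scalar_mxM mulfV // svar_neq0.
Qed.

Lemma real_hpow k : real_ss (((h) ^+ k.+1)%:M : 'M[F]_1) 0.
Proof.
elim: k => [|k IH]; first by rewrite expr1; exact: real_h.
have := real_mul IH real_h; rewrite mulmx0 -scalar_mxM -exprSr.
by [].
Qed.

Lemma real_polyh (P : {poly R}) : forall m, (size P <= m.+1)%N ->
  real_ss ((FracField.tofrac P * h ^+ m)%:M : 'M[F]_1) ((P`_m)%:M).
Proof.
elim/poly_ind: P => [|P c IH] m.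
  move=> _; rewrite rmorph0 mul0r coef0.
  by have := real_const (0 : 'M[R]_1); rewrite tfm0 ?raddf0.
rewrite size_MXaddC.
case: m => [|m].
  case: ifP => [/andP [/eqP -> /eqP ->] _|H].
    rewrite mul0r add0r rmorph0 mul0r coef0.
    by have := real_const (0 : 'M[R]_1); rewrite tfm0 ?raddf0.
  rewrite ltnS leqn0 size_poly_eq0 => /eqP P0; move: H; rewrite P0 mul0r add0r.
  rewrite expr0 mulr1 coefC eqxx => _.
  by have := real_const (c%:M : 'M[R]_1); rewrite tfm_scalar.
move=> Hs.
have HP : (size P <= m.+1)%N by move: Hs; case: ifP => [/andP [/eqP -> _]|_] //; rewrite size_poly0.
have := real_add (IH m HP) (real_mul (real_const (c%:M : 'M[R]_1)) (real_hpow m)).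
rewrite mulmx0 addr0 tfm_scalar -scalar_mxM -scalar_mxD' => H.
apply: (real_eqD (real_eqM H _)); last by rewrite coefD coefMX coefC /= addr0.
congr (_%:M); rewrite rmorphD rmorphM /= exprSr.
rewrite -[FracField.tofrac 'X]/(svar R) /cst.
have := svar_neq0; move: (svar R) (FracField.tofrac P) (FracField.tofrac c%:P) => s a b sn0.
rewrite mulrDl -!mulrA; congr (_ + _); congr (_ * _).
by rewrite mulrCA mulfV // mulr1.
Qed.

Lemma zmod_aux4 (V : zmodType) (x y : V) : x - (x - y) = y.
Proof. by rewrite opprB addrC subrK. Qed.

Lemma field_aux (K : fieldType) (a b c x : K) : c != 0 -> x != 0 -> b != 0 ->
  (c * a * x) / (c * b * x) = a / b.
Proof. by move=> *; field; apply/and3P. Qed.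

Lemma real_scalar (f : F) : proper_ratf f -> exists D, real_ss (f%:M : 'M_1) D.
Proof.
case=> p [q [q0 [spq ->]]].
set m := (size q).-1.
have sq : size q = m.+1 by rewrite prednK // size_poly_gt0.
set lc := lead_coef q; have lc0 : lc != 0 by rewrite lead_coef_eq0.
have hN := @real_polyh (lc^-1 *: p) m (leq_trans (size_scale_leq _ _) (leq_trans spq (eq_leq sq))).
have hQ := @real_polyh (lc^-1 *: q) m (leq_trans (size_scale_leq _ _) (eq_leq sq)).
have cq : (lc^-1 *: q)`_m = 1 by rewrite coefZ -lead_coefE mulVf.
rewrite cq in hQ.
have hL := real_add (real_const (1%:M : 'M[R]_1)) (real_opp hQ).
rewrite tfm1 subrr in hL.
have [_ hI] := real_fb hL.
rewrite zmod_aux4 in hI.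
have := real_mul hN hI => H; eexists; apply: (real_eqM H).
have hq : FracField.tofrac (lc^-1 *: q) != 0.
  by rewrite tofrac_eq0 scaler_eq0 negb_or q0 andbT invr_eq0.
have hhm : h ^+ m != 0 by apply: expf_neq0; rewrite invr_eq0; exact: svar_neq0.
move: hq hhm; set Q := FracField.tofrac (lc^-1 *: q); set x := h ^+ m => hq hx.
have Q0 : Q * x != 0 by exact: mulf_neq0 hq hx.
have -> : invmx ((Q * x)%:M : 'M[F]_1) = ((Q * x)^-1)%:M.
  by apply: inv_eq; rewrite -scalar_mxM (mulfV Q0).
rewrite -scalar_mxM; congr (_%:M); rewrite /Q -!mul_polyC !rmorphM /=.
have hc : FracField.tofrac (lc^-1)%:P != 0 by rewrite tofrac_eq0 polyC_eq0 invr_eq0.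
have hq' : FracField.tofrac q != 0 by rewrite tofrac_eq0.
exact: (field_aux _ hc hx hq').
Qed.

Lemma real_sum_ind m n (I : Type) (r : seq I) (P : pred I) (G : I -> 'M[F]_(m,n)) :
  (forall i, P i -> exists D, real_ss (G i) D) -> exists D, real_ss (\sum_(i <- r | P i) G i) D.
Proof.
move=> HG; apply: (big_ind (fun X => exists D, real_ss X D)).
- by exists 0; have := real_const (0 : 'M[R]_(m,n)); rewrite tfm0.
- by move=> x y [D1 h1] [D2 h2]; exists (D1 + D2); exact: real_add.
- exact: HG.
Qed.

Lemma tfm_delta m n (i : 'I_m) (j : 'I_n) : tfm (delta_mx i j : 'M[R]_(m,n)) = delta_mx i j.
Proof. by rewrite tfmE map_delta_mx. Qed.

Lemma real_proper m n (K : 'M[F]_(m,n)) : proper_tf K -> exists D, real_ss K D.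
Proof.
move=> HK; rewrite (matrix_sum_delta K).
apply: real_sum_ind => i _; apply: real_sum_ind => j _.
have [d hd] := real_scalar (HK i j).
have := real_mul (real_mul (real_const (delta_mx i (0 : 'I_1))) hd) (real_const (delta_mx (0 : 'I_1) j)).
rewrite !tfm_delta mul_mx_scalar -scalemxAl mul_delta_mx => H.
by eexists; exact: H.
Qed.

Section Struct.
Variables (N : nat) (Adj : 'M[bool]_N) (HAdj : forall i, Adj i i).

Lemma ord0_False (i : 'I_0) : False. Proof. by case: i. Qed.
Definition sk0 : 'I_0 -> 'I_N := fun i => False_rect _ (ord0_False i).

Definition sites_sum k1 k2 (s1 : 'I_k1 -> 'I_N) (s2 : 'I_k2 -> 'I_N) : 'I_(k1+k2) -> 'I_N :=
  fun i => match split i with inl a => s1 a | inr b => s2 b end.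

Lemma sites_l k1 k2 s1 s2 (a : 'I_k1) : @sites_sum k1 k2 s1 s2 (lshift k2 a) = s1 a.
Proof. by rewrite /sites_sum (unsplitK (inl _ a)). Qed.
Lemma sites_r k1 k2 s1 s2 (a : 'I_k2) : @sites_sum k1 k2 s1 s2 (rshift k1 a) = s2 a.
Proof. by rewrite /sites_sum (unsplitK (inr _ a)). Qed.

Definition SR m n (rs : 'I_m -> 'I_N) (cs : 'I_n -> 'I_N) (zc : pred 'I_n) (M : 'M[F]_(m,n)) :=
 exists k (sk : 'I_k -> 'I_N) (A : 'M[R]_k) B C D,
  [/\ real_in_S Adj sk sk A, real_in_S Adj sk cs B, real_in_S Adj rs sk C, real_in_S Adj rs cs D &
      [/\ (forall i q, B i q != 0 -> sk i = cs q), (forall p q, zc q -> D p q = 0) & M = ss_tf A B C D]].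

Lemma SR0 m n rs cs zc : @SR m n rs cs zc 0.
Proof.
exists 0%N, sk0, 0, 0, 0, 0; split; try by move=> *; rewrite mxE.
split; try by move=> *; rewrite mxE.
- by move=> i; case: (ord0_False i).
- by rewrite /ss_tf !tfm0 !mul0mx add0r.
Qed.

Lemma SR_add m n rs cs zc (M1 M2 : 'M[F]_(m,n)) :
  SR rs cs zc M1 -> SR rs cs zc M2 -> SR rs cs zc (M1 + M2).
Proof.
move=> [k1 [sk1 [A1 [B1 [C1 [D1 [hA1 hB1 hC1 hD1 [hl1 hz1 ->]]]]]]]].
move=> [k2 [sk2 [A2 [B2 [C2 [D2 [hA2 hB2 hC2 hD2 [hl2 hz2 ->]]]]]]]].
exists (k1 + k2)%N, (sites_sum sk1 sk2), (block_mx A1 0 0 A2), (col_mx B1 B2), (row_mx C1 C2), (D1 + D2).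
split.
- move=> i j; case: (split_ordP i) => a ->; case: (split_ordP j) => b ->;
  rewrite ?sites_l ?sites_r ?block_mxEul ?block_mxEur ?block_mxEdl ?block_mxEdr ?mxE //.
  + exact: hA1.
  + exact: hA2.
- move=> i q; case: (split_ordP i) => a ->; rewrite ?sites_l ?sites_r ?col_mxEu ?col_mxEd.
  + exact: hB1.
  + exact: hB2.
- move=> p j; case: (split_ordP j) => a ->; rewrite ?sites_l ?sites_r ?row_mxEl ?row_mxEr.
  + exact: hC1.
  + exact: hC2.
- by move=> p q H; rewrite mxE hD1 // hD2 // addr0.
split.
- move=> i q; case: (split_ordP i) => a ->; rewrite ?sites_l ?sites_r ?col_mxEu ?col_mxEd.
  + exact: hl1.
  + exact: hl2.
- by move=> p q H; rewrite mxE hz1 // hz2 // addr0.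
- rewrite /ss_tf Rs_diag tfm_row tfm_col tfmD mul_row_block !mulmx0 ?mul0mx.
  by rewrite addr0 add0r mul_row_col addrACA.
Qed.

Lemma SR_sum m n rs cs zc (I : Type) (r : seq I) (P : pred I) (G : I -> 'M[F]_(m,n)) :
  (forall i, P i -> SR rs cs zc (G i)) -> SR rs cs zc (\sum_(i <- r | P i) G i).
Proof.
move=> HG; apply: (big_ind (SR rs cs zc)); [exact: SR0 | exact: SR_add | exact: HG].
Qed.

Definition Eq n (q : 'I_n) : 'M[R]_n := diag_mx (delta_mx 0 q).
Definition Wq m (rs : 'I_m -> 'I_N) (c : 'I_N) : 'M[R]_m :=
  diag_mx (\row_p (if Adj (rs p) c then 1 else 0)).

Lemma SR_col m n rs cs (zc : pred 'I_n) (M : 'M[F]_(m,n)) k (A : 'M[R]_k) B C D (q : 'I_n) :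
  tf_structured Adj rs cs M -> M = ss_tf A B C D -> (forall p j, zc j -> D p j = 0) ->
  SR rs cs zc (M *m tfm (Eq q)).
Proof.
move=> hM eM hz.
exists k, (fun _ => cs q), A, (B *m Eq q), (Wq rs (cs q) *m C), (Wq rs (cs q) *m D *m Eq q).
split.
- by move=> i j; rewrite HAdj.
- move=> i j; rewrite mul_mx_diag !mxE eqxx /=; case: (eqVneq q j) => [<-|_].
    by rewrite HAdj.
  by rewrite mulr0.
- by move=> p i H; rewrite mul_diag_mx !mxE (negbTE H) mul0r.
- move=> p j H; rewrite mul_mx_diag mul_diag_mx !mxE eqxx /=; case: (eqVneq q j) => [e|_].
    by rewrite -e in H; rewrite (negbTE H) !mul0r.
  by rewrite mulr0.
split.
- move=> i j; rewrite mul_mx_diag !mxE eqxx /=; case: (eqVneq q j) => [->//|_].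
  by rewrite mulr0 eqxx.
- by move=> p j hj; rewrite mul_mx_diag mul_diag_mx !mxE hz // mulr0 mul0r.
rewrite /ss_tf !tfmM.
have -> : tfm (Wq rs (cs q)) *m tfm C *m Rs A *m (tfm B *m tfm (Eq q)) +
   tfm (Wq rs (cs q)) *m tfm D *m tfm (Eq q) = tfm (Wq rs (cs q)) *m M *m tfm (Eq q).
  rewrite eM /ss_tf; move: (tfm (Wq rs (cs q))) (tfm C) (Rs A) (tfm B) (tfm (Eq q)) (tfm D).
  by move=> w c r b e d; rewrite mulmxDr mulmxDl !mulmxA.
apply/matrixP => p j; rewrite /Wq /Eq !tfmE !map_diag_mx !mul_mx_diag mul_diag_mx !mxE eqxx /=.
case: (eqVneq j q) => [->|_]; last by rewrite polyC0 tofrac0 !mulr0.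
case: ifP => hA; first by rewrite polyC1 tofrac1 mul1r.
rewrite (hM p q); last by rewrite hA.
by rewrite !mul0r.
Qed.

Lemma sum_Eq n : \sum_(q < n) (Eq q) = 1%:M.
Proof.
apply/matrixP => i j; rewrite summxE (bigD1 i) //= big1 => [|q qi]; rewrite !mxE.
  by rewrite !eqxx /= addr0.
by rewrite eqxx /= eq_sym (negbTE qi) mul0rn.
Qed.

Lemma SR_of m n rs cs (zc : pred 'I_n) (M : 'M[F]_(m,n)) k (A : 'M[R]_k) B C D :
  tf_structured Adj rs cs M -> M = ss_tf A B C D -> (forall p j, zc j -> D p j = 0) ->
  SR rs cs zc M.
Proof.
move=> hM eM hz.
have -> : M = \sum_(q < n) (M *m tfm (Eq q)).
  by rewrite -mulmx_sumr -(big_morph (@tfm R n n) (@tfmD n n) (@tfm0 n n)) sum_Eq tfm1 mulmx1.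
apply: SR_sum => q _; exact: SR_col hM eM hz.
Qed.

Lemma SR_close n1 m2 n2 (s1 : 'I_n1 -> 'I_N) (su : 'I_m2 -> 'I_N) (sy : 'I_n2 -> 'I_N)
  (M : 'M[F]_(n1 + m2, n1 + n2)) :
  SR (sites_sum s1 su) (sites_sum s1 sy) (fun j => (j < n1)%N) M ->
  (1%:M - ulsubmx M) \in unitmx /\
  structured_realizable Adj su sy (drsubmx M + dlsubmx M *m invmx (1%:M - ulsubmx M) *m ursubmx M).
Proof.
move=> [k [sk [A [B [C [D [hA hB hC hD [hl hz eM]]]]]]]].
have eD : D = block_mx 0 (ursubmx D) 0 (drsubmx D).
  rewrite -{1}(submxK D); congr block_mx; apply/matrixP => i j; rewrite !mxE hz //= ltn_ord.
have eM' : M = ss_tf A (row_mx (lsubmx B) (rsubmx B)) (col_mx (usubmx C) (dsubmx C))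
   (block_mx 0 (ursubmx D) 0 (drsubmx D)) by rewrite hsubmxK vsubmxK -eD.
have [hu he] := lft eM'.
split; first exact: hu.
exists k, sk, (A + lsubmx B *m usubmx C), (rsubmx B + lsubmx B *m ursubmx D), (dsubmx C), (drsubmx D).
split.
- move=> i j H; rewrite !mxE (hA i j H) add0r big1 // => r _; rewrite !mxE.
  case: (eqVneq (B i (lshift n2 r)) 0) => [->|/hl e]; first by rewrite mul0r.
  rewrite (hC (lshift m2 r) j) ?mulr0 //; rewrite sites_l; move: e; rewrite sites_l => <-; exact: H.
- move=> i q H; rewrite !mxE (hB i (rshift n1 q)) ?sites_r // add0r big1 // => r _; rewrite !mxE.
  case: (eqVneq (B i (lshift n2 r)) 0) => [->|/hl e]; first by rewrite mul0r.
  rewrite (hD (lshift m2 r) (rshift n1 q)) ?mulr0 // sites_l sites_r; move: e; rewrite sites_l => <-; exact: H.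
- by move=> p j H; rewrite mxE; apply: hC; rewrite sites_r.
- by move=> p q H; rewrite !mxE; apply: hD; rewrite !sites_r.
- exact: he.
Qed.

Lemma K_id nu ny n (K : 'M[F]_(nu,ny)) (c : 'M[F]_(ny,n)) (R0 : 'M[F]_n) (b : 'M[F]_(n,nu))
  (a : 'M[F]_n) (P : 'M[F]_nu) (W : 'M[F]_n) :
  P *m (1%:M - K *m c *m R0 *m b) = 1%:M -> (1%:M - K *m c *m R0 *m b) *m P = 1%:M ->
  W *m ((1%:M + a *m R0) *m (1%:M + b *m (P *m K *m c *m R0))) = 1%:M ->
  P *m K + (- (P *m K *m c *m R0)) *m W *m ((1%:M + a *m R0) *m b *m (P *m K)) = K.
Proof.
move=> hP1 hP2 hW.
move: (1%:M + a *m R0) hW => T hW.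
have UxB : P *m K *m c *m R0 *m b = P *m (K *m c *m R0 *m b) by rewrite !mulmxA.
move: UxB hP1 hP2; move: (K *m c *m R0 *m b) => L UxB hP1 hP2.
move: (P *m K *m c *m R0) hW UxB => Ux hW UxB.
have PL : 1%:M + P *m L = P by move: hP1; rewrite mulmxBr mulmx1 => e; rewrite -e subrK.
have hQ : Ux *m W *m T *m b + Ux *m W *m T *m b *m (P *m L) = P *m L.
  have e := congr1 (fun X => Ux *m X *m b) hW; rewrite /= mulmx1 UxB in e.
  rewrite !mulmxA mulmxDr mulmx1 mulmxDl !mulmxA -(mulmxA _ Ux b) UxB in e.
  exact: e.
have [Q eQ] : exists Q, Q = Ux *m W *m T *m b by eexists.
rewrite -eQ in hQ.
have QP : Q *m P = P *m L by rewrite -{1}PL mulmxDr mulmx1 hQ.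
have QE : Q = P *m L *m (1%:M - L) by rewrite -[Q]mulmx1 -{1}hP1 mulmxA QP.
have -> : (- Ux) *m W *m (T *m b *m (P *m K)) = - (Q *m P *m K).
  by rewrite eQ !mulmxA !mulNmx.
rewrite QE -(mulmxA (P *m L)) hP2 mulmx1.
by rewrite -(mulmxA P L K) -mulmxBr -{1}(mul1mx K) -mulmxBl mulmxA hP1 mul1mx.
Qed.

Lemma block_decomp (T : ringType) m1 m2 n1 n2 (a : 'M[T]_(m1,n1)) (b : 'M[T]_(m1,n2))
  (c : 'M[T]_(m2,n1)) (d : 'M[T]_(m2,n2)) :
 block_mx a b c d = col_mx 1%:M 0 *m (a *m row_mx 1%:M 0 + b *m row_mx 0 1%:M) +
   col_mx 0 1%:M *m (c *m row_mx 1%:M 0 + d *m row_mx 0 1%:M).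
Proof.
rewrite !mul_mx_row !mulmx1 !mulmx0 !add_row_mx !addr0 !add0r !mul_col_mx !mul1mx !mul0mx.
by rewrite add_col_mx !addr0 !add0r block_mxEv.
Qed.

Lemma real_block m1 m2 n1 n2 (M11 : 'M[F]_(m1,n1)) (M12 : 'M[F]_(m1,n2))
  (M21 : 'M[F]_(m2,n1)) (M22 : 'M[F]_(m2,n2)) D11 D12 D21 D22 :
  real_ss M11 D11 -> real_ss M12 D12 -> real_ss M21 D21 -> real_ss M22 D22 ->
  real_ss (block_mx M11 M12 M21 M22) (block_mx D11 D12 D21 D22).
Proof.
move=> h11 h12 h21 h22; rewrite (block_decomp M11) (block_decomp D11).
have := real_add
  (real_mul (real_const (col_mx 1%:M 0 : 'M[R]_(m1 + m2, m1)))
     (real_add (real_mul h11 (real_const (row_mx 1%:M 0 : 'M[R]_(n1, n1 + n2))))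
               (real_mul h12 (real_const (row_mx 0 1%:M : 'M[R]_(n2, n1 + n2))))))
  (real_mul (real_const (col_mx 0 1%:M : 'M[R]_(m1 + m2, m2)))
     (real_add (real_mul h21 (real_const (row_mx 1%:M 0 : 'M[R]_(n1, n1 + n2))))
               (real_mul h22 (real_const (row_mx 0 1%:M : 'M[R]_(n2, n1 + n2)))))).
by rewrite !tfm_col !tfm_row !tfm1 !tfm0.
Qed.

Lemma sR_eq k (A : 'M[R]_k) : 1%:M + tfm A *m Rs A = svar R *: Rs A.
Proof. by have := RsK A; rewrite mulmxBl mul_scalar_mx => e; rewrite -e subrK. Qed.

Lemma zmod_aux5 (V : zmodType) (x y : V) : y - - (x + - y) = x.
Proof. by rewrite opprK addrC addrNK. Qed.
End Struct.

Lemma E_eq n nu (a R0 : 'M[F]_n) (b : 'M[F]_(n,nu)) (Ux : 'M[F]_(nu,n)) (s : F) :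
  1%:M + a *m R0 = s *: R0 ->
  (1%:M + a *m R0) *m (1%:M + b *m Ux) - 1%:M = s *: (R0 + R0 *m b *m Ux) - 1%:M.
Proof. by move=> ->; rewrite -scalemxAl mulmxDr mulmx1 mulmxA. Qed.

Lemma H_eq n nu ny (a R0 : 'M[F]_n) (b : 'M[F]_(n,nu)) (Uy : 'M[F]_(nu,ny)) (s : F) :
  1%:M + a *m R0 = s *: R0 -> (1%:M + a *m R0) *m b *m Uy = s *: (R0 *m b *m Uy).
Proof. by move=> ->; rewrite -!scalemxAl. Qed.

Lemma blk_struct N (Adj : 'M[bool]_N) (HAdj : forall i, Adj i i) n nu ny
  (sx : 'I_n -> 'I_N) (su : 'I_nu -> 'I_N) (sy : 'I_ny -> 'I_N)
  (E Xxx : 'M[F]_n) (H Xxy : 'M[F]_(n,ny)) (Ux : 'M[F]_(nu,n)) (Uy : 'M[F]_(nu,ny)) (s : F) :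
  E = s *: Xxx - 1%:M -> H = s *: Xxy -> tf_structured Adj sx sx Xxx ->
  tf_structured Adj sx sy Xxy -> tf_structured Adj su sx Ux -> tf_structured Adj su sy Uy ->
  tf_structured Adj (sites_sum sx su) (sites_sum sx sy) (block_mx (- E) H (- Ux) Uy).
Proof.
move=> -> -> h1 h2 h3 h4 p q; case: (split_ordP p) => a ->; case: (split_ordP q) => b ->;
  rewrite ?sites_l ?sites_r ?block_mxEul ?block_mxEur ?block_mxEdl ?block_mxEdr => hA.
- have ab : a != b by apply: contraNneq hA => ->; rewrite HAdj.
  by rewrite !mxE (h1 a b hA) (negbTE ab) mulr0 /= subr0 oppr0.
- by rewrite !mxE (h2 a b hA) mulr0.
- by rewrite !mxE (h3 a b hA) oppr0.
- exact: h4.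
Qed.

Lemma main_thm N (Adj : 'M[bool]_N) (HAdj : forall i, Adj i i) n nu ny
  (sx : 'I_n -> 'I_N) (su : 'I_nu -> 'I_N) (sy : 'I_ny -> 'I_N)
  (A : 'M[R]_n) (B2 : 'M[R]_(n, nu)) (C2 : 'M[R]_(ny, n)) (K : 'M[F]_(nu, ny)) :
  proper_tf K -> closed_loop_TF_structured Adj sx su sy A B2 C2 K ->
  structured_realizable Adj su sy K.
Proof.
move=> HK [hxx hxy hux huy].
have [DK hK] := real_proper HK.
have hR := real_Rs A.
have hL : real_ss (K *m tfm C2 *m Rs A *m tfm B2) 0.
  apply: (real_eqD (real_mul (real_mul (real_mul hK (real_const C2)) hR) (real_const B2))).
  by rewrite mulmx0 mul0mx.
have [hu hP] := real_fb hL.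
have hUY := real_mul hP hK.
have hUX : real_ss (invmx (1%:M - K *m tfm C2 *m Rs A *m tfm B2) *m K *m tfm C2 *m Rs A) 0.
  by apply: (real_eqD (real_mul (real_mul hUY (real_const C2)) hR)); rewrite mulmx0.
have hT : real_ss (1%:M + tfm A *m Rs A) (1%:M + A *m 0).
  by have := real_add (real_const (1%:M : 'M[R]_n)) (real_mul (real_const A) hR); rewrite tfm1.
have hV := real_add (real_const (1%:M : 'M[R]_n)) (real_mul (real_const B2) hUX).
rewrite tfm1 in hV.
have hE := real_add (real_mul hT hV) (real_const (- 1%:M : 'M[R]_n)).
rewrite tfmN tfm1 in hE.
have hH := real_mul (real_mul hT (real_const B2)) hUY.
have hM := real_block (real_opp hE) hH (real_opp hUX) hUY.
have eD : block_mx (- ((1%:M + A *m 0) *m (1%:M + B2 *m 0) - 1%:M))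
         ((1%:M + A *m 0) *m B2 *m (1%:M *m DK)) (- 0) (1%:M *m DK) =
         (block_mx 0 (B2 *m DK) 0 DK : 'M[R]_(n + nu, n + ny)).
  by rewrite !mulmx0 !addr0 !mul1mx subrr !oppr0.
have [k [Ab [Bb [Cb eMb]]]] := real_eqD hM eD.
have hz : forall p (j : 'I_(n + ny)), (j < n)%N ->
    (block_mx 0 (B2 *m DK) 0 DK : 'M[R]_(n + nu, n + ny)) p j = 0.
  move=> p j; case: (split_ordP j) => b -> hj; last by move: hj.
  by case: (split_ordP p) => a ->; rewrite ?block_mxEul ?block_mxEdl mxE.
have eE := E_eq (tfm B2) (invmx (1%:M - K *m tfm C2 *m Rs A *m tfm B2) *m K *m tfm C2 *m Rs A) (sR_eq A).
have eH := H_eq (tfm B2) (invmx (1%:M - K *m tfm C2 *m Rs A *m tfm B2) *m K) (sR_eq A).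
have hst := blk_struct HAdj eE eH hxx hxy hux huy.
have hS := SR_of (zc := fun j : 'I_(n + ny) => (j < n)%N) HAdj hst eMb hz.
have [hu2 [k' [sk [AK [BK [CK [DK' [h1 h2 h3 h4 eK]]]]]]]] := SR_close hS.
exists k', sk, AK, BK, CK, DK'; split; [exact: h1|exact: h2|exact: h3|exact: h4|].
rewrite -eK block_mxKdr block_mxKdl block_mxKur block_mxKul.
rewrite block_mxKul in hu2.
rewrite /Phi_ux /Phi_uy /loop_mx /resolvent.
symmetry; apply: K_id.
- exact: (mulVmx hu).
- exact: (mulmxV hu).
- by have := mulVmx hu2; rewrite {2}zmod_aux5.
Qed.
End S.

Theorem theorem1 (R : realType) (N : nat) (Adj : 'M[bool]_N)
  (HAdj : forall i, Adj i i)
  (n nu ny nw nz : nat)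
  (sx : 'I_n -> 'I_N) (su : 'I_nu -> 'I_N) (sy : 'I_ny -> 'I_N)
  (A : 'M[R]_n) (B1 : 'M[R]_(n, nw)) (B2 : 'M[R]_(n, nu))
  (C1 : 'M[R]_(nz, n)) (D12 : 'M[R]_(nz, nu))
  (C2 : 'M[R]_(ny, n)) (D21 : 'M[R]_(ny, nw))
  (K : 'M[ratf R]_(nu, ny)) :
  proper_tf K ->
  well_posed A B2 C2 K ->
  closed_loop_TF_structured Adj sx su sy A B2 C2 K ->
  structured_realizable Adj su sy K.
Proof.
move=> HK _ HS; exact: (main_thm HAdj HK HS).
Qed.
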